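(* Let $\Delta$ be a $2$-connected simplicial graph of genus $g\ge 4$ in which every vertex has valency at least $3$. Then the girth of $\Delta$ is at most $\left\lfloor\frac{g+3}{2}\right\rfloor$, except for at most three graphs (up to isomorphism).
   Context: A simplicial graph is a finite $1$-dimensional simplicial complex (a finite simple graph); it is $2$-connected if it is connected, has at least $3$ vertices, and remains connected after deleting any vertex. The genus is $g=1-v+e$ where $v$, $e$ are the numbers of vertices and edges. The girth is the length of a shortest cycle. *)

(* Defs.v *)
From mathcomp Require Import all_boot all_order all_algebra.
Set Implicit Arguments. Unset Strict Implicit. Unset Printing Implicit Defensive.

Definition simple_graph (T : finType) (e : rel T) : Prop :=
  symmetric e /\ irreflexive e.

Definition edges (T : finType) (e : rel T) : {set {set T}} :=
  [set [set x; y] | x in T, y in T & e x y].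

Definition genus (T : finType) (e : rel T) : int :=
  (1%:Z - (#|T|)%:Z + (#|edges e|)%:Z)%R.

Definition connected_graph (T : finType) (e : rel T) : Prop :=
  forall x y : T, connect e x y.

Definition del_vertex (T : finType) (e : rel T) (v : T) : rel T :=
  fun a b => [&& e a b, a != v & b != v].

Definition two_connected (T : finType) (e : rel T) : Prop :=
  [/\ connected_graph e, 3 <= #|T| &
      forall v x y : T, x != v -> y != v -> connect (del_vertex e v) x y].

Definition valency (T : finType) (e : rel T) (x : T) : nat := #|[pred y | e x y]|.

Definition has_cycle_of_length (T : finType) (e : rel T) (k : nat) : bool :=
  (2 < k) && [exists t : k.-tuple T, uniq t && cycle e t].

(* girth = length of a shortest cycle; for an acyclic graph we use the
   convention #|T|.+1 (any cycle has length <= #|T|). *)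
Definition girth (T : finType) (e : rel T) : nat :=
  \big[minn/#|T|.+1]_(0 <= k < #|T|.+1 | has_cycle_of_length e k) k.

Definition graph_iso (T T' : finType) (e : rel T) (e' : rel T') : Prop :=
  exists f : T -> T', bijective f /\ forall x y, e x y = e' (f x) (f y).

(* Main.v *)
Require Import Defs.
From mathcomp Require Import all_boot all_order all_algebra.
From mathcomp Require Import zify.
Set Implicit Arguments. Unset Strict Implicit. Unset Printing Implicit Defensive.

Section NBW.
Variables (A : eqType) (r d : rel A).

Fixpoint nbwg (w : seq A) : bool :=
  match w with
  | a :: w1 => match w1 with
     | b :: w2 => [&& r a b, (match w2 with c :: _ => d a c | [::] => true end) & nbwg w1]
     | [::] => true end
  | [::] => true end.

Lemma nbwg_tail a w : nbwg (a :: w) -> nbwg w.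
Proof. by case: w => [|b [|c w]] //= /and3P[]. Qed.

Lemma nbwg_path a w : nbwg (a :: w) -> path r a w.
Proof.
elim: w a => [|b w IH] a //= H.
have [Hab _ Hw] := and3P H. by rewrite Hab (IH b Hw).
Qed.

Lemma nbwg_catl s t : nbwg (s ++ t) -> nbwg s.
Proof.
elim: s => [|a s IH] // H.
have H3 := IH (nbwg_tail H).
case: s H IH H3 => [|b s] // H _ H3.
move: H; rewrite cat_cons cat_cons /= => /and3P[H1 H2 _].
rewrite H1 /=. apply/andP; split => //.
by case: s H2 H3.
Qed.

Lemma nbwg_cons2 a b w :
  nbwg (a :: b :: w) = [&& r a b, (if w is c :: _ then d a c else true) & nbwg (b :: w)].
Proof. by []. Qed.

Lemma nbwg_rcons2 x w y z :
  nbwg (x :: rcons (rcons w y) z) =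
  [&& nbwg (x :: rcons w y), r y z & d (last x w) z].
Proof.
elim: w x => [|c w IH] x.
  rewrite /= !andbT.
  by case: (r x y); case: (d x z); case: (r y z).
rewrite !rcons_cons !nbwg_cons2 IH /=.
case: w {IH} => [|c' w] /=.
  by case: (r x c); case: (d x y); case: (r c y); case: (r y z); case: (d c z).
by case: (r x c); case: (d x c'); case: (r y z); case: (d _ z); case: (nbwg _).
Qed.

Hypothesis rsym : symmetric r.
Hypothesis dsym : symmetric d.

Lemma nbwg_join v ux u' z :
  v != [::] -> nbwg (ux :: rcons u' z) -> nbwg (rcons v z) ->
  d (last ux u') (last z v) -> nbwg (ux :: rcons u' z ++ rev v).
Proof.
elim/last_ind: v ux u' z => [|v' y IH] ux u' z // _ Hu Hv Hd.
rewrite rev_rcons -cat_rcons last_rcons in Hd *.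
have Hzy : r z y /\ (v' != [::] -> nbwg (rcons v' y) /\ d (last y v') z).
  case: v' Hv {IH} => [|x' v''] Hv.
    by move: Hv => /=; rewrite andbT rsym.
  move: Hv; rewrite rcons_cons nbwg_rcons2 => /and3P[H1 H2 H3].
  by rewrite rsym H2; split => // _; rewrite -rcons_cons H1 /=.
have Hn : nbwg (ux :: rcons (rcons u' z) y).
  by rewrite nbwg_rcons2 Hu Hzy.1 Hd.
case: v' Hv Hzy IH => [|x' v''] Hv Hzy IH.
  by rewrite /= cats0.
have [H1 H2] := Hzy.2 isT.
apply: IH => //.
by rewrite last_rcons dsym.
Qed.

End NBW.

Section Graph.
Variables (T : finType) (e : rel T).
Hypothesis Hsym : symmetric e.
Hypothesis Hirr : irreflexive e.

Definition nbw := nbwg e (fun a b => a != b).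

Lemma bigmin_le_nat (r : seq nat) (P : pred nat) (F : nat -> nat) x0 j :
  j \in r -> P j -> \big[minn/x0]_(i <- r | P i) F i <= F j.
Proof.
elim: r => [|a r IH] //; rewrite inE big_cons => /orP[/eqP<-|jr] Pj.
  by rewrite Pj geq_minl.
case: (P a); last exact: IH.
exact: leq_trans (geq_minr _ _) (IH jr Pj).
Qed.

Lemma girth_le k : has_cycle_of_length e k -> girth e <= k.
Proof.
move=> H; have := H; case/andP => _ /existsP[t /andP[ut _]].
apply: bigmin_le_nat => //.
rewrite mem_index_iota /= ltnS.
by rewrite -(size_tuple t) -(card_uniqP ut) max_card.
Qed.

Lemma nbw_cycle w : nbw w -> ~~ uniq w ->
  exists2 k, k < size w & has_cycle_of_length e k.
Proof.
elim: w => [|a w IH] // Hw.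
rewrite cons_uniq negb_and negbK => /orP[aw|]; last first.
  by move=> /(IH (nbwg_tail Hw))[k k1 k2]; exists k => //; apply: ltnW.
case/orP: (orbN (uniq w)) => [uw|]; last first.
  by move=> /(IH (nbwg_tail Hw))[k k1 k2]; exists k => //; apply: ltnW.
case/splitPr: aw uw Hw => s1 s2 uw Hw.
have as1 : a \notin s1.
  by move: uw; rewrite cat_uniq => /and3P[_ /hasPn /(_ a (mem_head _ _))].
have us1 : uniq s1 by move: uw; rewrite cat_uniq => /andP[].
have Hp := nbwg_path Hw.
move: (Hp); rewrite cat_path => /andP[Hp1 /andP[Hl _]].
exists (size (a :: s1)).
  by rewrite /= size_cat /= ltnS -addSnnS leq_addr.
apply/andP; split.
  case: s1 {as1 us1 Hp Hp1 Hl uw} Hw => [|b [|c s1]] //=.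
    by rewrite Hirr.
  by rewrite eqxx andbF.
apply/existsP; exists (in_tuple (a :: s1)).
rewrite /= as1 us1 /= -cats1 cat_path Hp1 /= Hl.
done.
Qed.

Lemma nbwU w : nbw w -> size w <= girth e -> uniq w.
Proof.
move=> Hw Hs; apply/negP => /negP/(nbw_cycle Hw)[k k1 k2].
have := girth_le k2. by move=> /(leq_trans Hs); rewrite leqNgt k1.
Qed.

Lemma nbw_rcons_l a w z : nbw (a :: rcons w z) -> nbw (a :: w).
Proof. by rewrite -rcons_cons -cats1 => /nbwg_catl. Qed.

Lemma closed_nonuniq (a : T) s : s != [::] -> last a s = a -> ~~ uniq (a :: s).
Proof.
case/lastP: s => [|r z] // _; rewrite last_rcons => ->.
by rewrite /= mem_rcons mem_head.
Qed.

Lemma T2 a s1 s2 : size s1 + size s2 < girth e ->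
  nbw (a :: s1) -> nbw (a :: s2) -> last a s1 = last a s2 -> s1 = s2.
Proof.
move: {2}(size s1 + size s2) (leqnn (size s1 + size s2)) => N.
elim: N a s1 s2 => [|N IH] a s1 s2 HN Hg H1 H2 Hl.
  by move: HN; rewrite leqn0 addn_eq0 !size_eq0 => /andP[/eqP-> /eqP->].
case: (altP (s1 =P [::])) => [E1|N1].
  subst s1; case: (altP (s2 =P [::])) => [->//|N2].
  have := nbwU H2; rewrite /= => /(_ Hg).
  by move/negP: (closed_nonuniq N2 (esym Hl)).
case: (altP (s2 =P [::])) => [E2|N2].
  subst s2; have := nbwU H1; rewrite /= => /(_ (leq_trans _ Hg)); rewrite addn0 => /(_ (leqnn _)).
  by move/negP: (closed_nonuniq N1 Hl).
move: N1 N2 H1 H2 Hl HN Hg.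
case/lastP: s1 => [|r1 z1] //; case/lastP: s2 => [|r2 z2] // _ _ H1 H2.
rewrite !last_rcons => Ez; subst z2.
rewrite !size_rcons addSn addnS !ltnS => HN Hg.
case: (altP (last a r1 =P last a r2)) => [El|Nl].
  have -> // : r1 = r2.
  apply: (IH a) => //.
  - exact: leq_trans (leqnSn _) HN.
  - exact: leq_trans (leqnSn _) (ltnW Hg).
  - exact: nbw_rcons_l H1.
  - exact: nbw_rcons_l H2.
have Hj : nbw (a :: rcons r1 z1 ++ rev (a :: r2)).
  apply: nbwg_join => //; first by move=> x y; rewrite eq_sym.
have Hs : size (a :: rcons r1 z1 ++ rev (a :: r2)) <= girth e.
  by rewrite /= size_cat size_rcons size_rev /= addSn addnS.
have := nbwU Hj Hs.
by rewrite /= mem_cat mem_rev mem_head orbT.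
Qed.

End Graph.

Section Moore.
Variables (T : finType) (e : rel T).
Hypothesis Hsym : symmetric e.
Hypothesis Hirr : irreflexive e.
Hypothesis Hdeg : forall x, 3 <= #|[pred y | e x y]|.

Lemma deg_minus v u : 2 <= #|[pred w | e v w && (w != u)]|.
Proof.
have := cardID (pred1 u) [pred y | e v y].
have H1 : #|[predI [pred y | e v y] & pred1 u]| <= 1.
  rewrite -(card1 u); apply: subset_leq_card; apply/subsetP => w; rewrite !inE => /andP[].
  by [].
have -> : #|[predD [pred y | e v y] & pred1 u]| = #|[pred w | e v w && (w != u)]|.
  by apply: eq_card => w; rewrite !inE andbC.
move=> E; have := Hdeg v; rewrite -E.
move: H1; case: #|[predI _ & _]| => [|[|k]] //= _.
by rewrite add0n => /ltnW.
Qed.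

Definition Fx (S : {set T * T}) : {set T * T} :=
  [set p | [exists u, [&& (u, p.1) \in S, e p.1 p.2 & p.2 != u]]].

Lemma nbw_ext a b t z : nbw e (a :: b :: t) -> e (last b t) z ->
  z != last a (belast b t) -> nbw e (a :: b :: rcons t z).
Proof.
case/lastP: t => [|t y].
  by rewrite /= => /andP[-> _] -> ; rewrite eq_sym => ->.
rewrite last_rcons belast_rcons => H1 H2 H3.
have -> : a :: b :: rcons (rcons t y) z = a :: rcons (rcons (b :: t) y) z by [].
rewrite /nbw nbwg_rcons2; apply/and3P; split => //.
by rewrite eq_sym.
Qed.

Variable S1 : {set T * T}.
Hypothesis HS1 : forall p, p \in S1 -> e p.1 p.2.

Lemma Srep k p : p \in iter k Fx S1 -> exists a b t,
  [/\ (a, b) \in S1, nbw e (a :: b :: t), size t = k, last b t = p.2 &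
      last a (belast b t) = p.1].
Proof.
elim: k p => [|k IH] [p1 p2] /=.
  move=> H; exists p1, p2, [::]; split => //=.
  by rewrite andbT; apply: (HS1 H).
rewrite inE => /existsP[u /and3P[Hu He Hne]].
have [a [b [t [H1 H2 H3 H4 H5]]]] := IH _ Hu.
rewrite /= in H4 H5 He Hne.
exists a, b, (rcons t p2); split.
- by [].
- by apply: nbw_ext => //; rewrite ?H4 ?H5.
- by rewrite size_rcons H3.
- by rewrite last_rcons.
- by rewrite belast_rcons /= H4.
Qed.

Lemma double k : {in iter k Fx S1 &, forall p q, p.2 = q.2 -> p = q} ->
  2 * #|iter k Fx S1| <= #|iter k.+1 Fx S1|.
Proof.
move=> Hinj; set S := iter k Fx S1.
pose nxt (p : T * T) := enum [pred w | e p.2 w && (w != p.1)].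
have Hsz p : 2 <= size (nxt p) by rewrite -cardE deg_minus.
pose phi (pb : (T * T) * bool) := (pb.1.2, nth pb.1.2 (nxt pb.1) pb.2).
have Hb (b : bool) p : b < size (nxt p) by case: b; apply: leq_trans (Hsz p).
have -> : 2 * #|S| = #|setX S [set: bool]| by rewrite cardsX cardsT card_bool mulnC.
rewrite -(@card_in_imset _ _ phi); last first.
  move=> [p b] [q c]; rewrite !inE /= => /andP[pS _] /andP[qS _] [E1 E2].
  have Epq := Hinj _ _ pS qS E1; subst q.
  move/eqP: E2; rewrite nth_uniq ?enum_uniq ?Hb // => /eqP Ebc.
  by congr pair; apply/eqP; move: Ebc; case: b; case: c.
apply: subset_leq_card; apply/subsetP => w /imsetP[[p b]]; rewrite !inE /= => /andP[pS _] ->.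
apply/existsP; exists p.1 => /=.
have := mem_nth p.2 (Hb b p); rewrite mem_enum inE => /andP[-> ->].
by rewrite -surjective_pairing pS.
Qed.

Definition Uset K := [set kp : 'I_K * (T * T) | kp.2 \in iter kp.1 Fx S1].

Lemma count_levels K :
  (forall j k p q, j < K -> k < K -> p \in iter j Fx S1 -> q \in iter k Fx S1 ->
     p.2 = q.2 -> j = k /\ p = q) ->
  \sum_(k < K) #|iter k Fx S1| = #|[set kp.2.2 | kp in Uset K]|.
Proof.
move=> Hinj; rewrite card_in_imset; last first.
  move=> [j p] [k q]; rewrite !inE /= => Hp Hq E.
  have [Ejk Epq] := Hinj _ _ _ _ (ltn_ord j) (ltn_ord k) Hp Hq E.
  by rewrite Epq (val_inj Ejk).
rewrite -sum1_card /Uset.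
rewrite (eq_bigl (fun kp : 'I_K * (T * T) => true && (kp.2 \in iter kp.1 Fx S1))); last by move=> kp; rewrite inE.
rewrite -(pair_big_dep xpredT (fun (k : 'I_K) (p : T * T) => p \in iter k Fx S1) (fun _ _ => 1)) /=.
by apply: eq_bigr => k _; rewrite sum1_card.
Qed.

Lemma levels_ge K c : c <= #|S1| ->
  (forall j p q, j < K -> p \in iter j Fx S1 -> q \in iter j Fx S1 -> p.2 = q.2 -> p = q) ->
  forall k, k < K -> c * 2 ^ k <= #|iter k Fx S1|.
Proof.
move=> Hc Hinj; elim => [|k IH] Hk; first by rewrite expn0 muln1.
rewrite expnS mulnCA mulnC.
apply: leq_trans (double _); last by move=> p q; apply: Hinj; apply: ltnW.
by rewrite mulnC leq_mul2l /= IH // ltnW.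
Qed.

End Moore.

Lemma sum_geom c K : \sum_(k < K) c * 2 ^ k + c = c * 2 ^ K.
Proof.
elim: K => [|K IH]; first by rewrite big_ord0 expn0 muln1.
by rewrite big_ord_recr /= addnAC IH expnS mulnCA mul2n -addnn.
Qed.

Section Moore2.
Variables (T : finType) (e : rel T).
Hypothesis Hsym : symmetric e.
Hypothesis Hirr : irreflexive e.
Hypothesis Hdeg : forall x, 3 <= #|[pred y | e x y]|.

Lemma moore_vertex (x : T) d : d.*2 < girth e -> 3 * 2 ^ d <= #|T| + 2.
Proof.
move=> Hg.
pose S1 := [set p : T * T | (p.1 == x) && e x p.2].
have HS1 : forall p, p \in S1 -> e p.1 p.2.
  by move=> [p1 p2]; rewrite inE /= => /andP[/eqP-> ->].
have Hc : 3 <= #|S1|.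
  apply: leq_trans (Hdeg x) _.
  have <- : #|[set (x, y) | y in [pred y | e x y]]| = #|[pred y | e x y]|.
    by apply: card_imset => y z [].
  apply: subset_leq_card; apply/subsetP => p /imsetP[y]; rewrite inE => Hy ->.
  by rewrite inE /= eqxx Hy.
have Hrep := Srep HS1.
have Hinj : forall j k p q, j < d -> k < d -> p \in iter j (Fx e) S1 ->
    q \in iter k (Fx e) S1 -> p.2 = q.2 -> j = k /\ p = q.
  move=> j k [p1 p2] [q1 q2] Hj Hk /Hrep[a1 [b1 [t1 [H1 H2 H3 H4 H5]]]].
  move=> /Hrep[a2 [b2 [t2 [G1 G2 G3 G4 G5]]]] /= E.
  move: H1 G1; rewrite !inE /= => /andP[/eqP Ea1 _] /andP[/eqP Ea2 _].
  subst a1 a2.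
  have : b1 :: t1 = b2 :: t2.
    apply: (T2 Hsym Hirr (a:=x)) => //; last by rewrite /= H4 G4 E.
    rewrite /= H3 G3; apply: leq_ltn_trans Hg; rewrite -addnn; exact: leq_add Hj Hk.
  case=> Eb Et; subst b2 t2; split; first by rewrite -H3 -G3.
  move: H5 G5 => /= H5 G5; congr pair => //; by rewrite -H5 -G5.
have Hx : forall k p, k < d -> p \in iter k (Fx e) S1 -> p.2 != x.
  move=> k p Hk /Hrep[a1 [b1 [t1 [H1 H2 H3 H4 H5]]]].
  move: H1; rewrite !inE /= => /andP[/eqP Ea1 _]; subst a1.
  apply/eqP => E.
  have : [::] = b1 :: t1.
    apply: (T2 Hsym Hirr (a:=x)) => //; last by rewrite /= H4 E.
    rewrite /= H3; apply: leq_ltn_trans Hg; rewrite -addnn.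
    exact: leq_trans Hk (leq_addr _ _).
  by [].
have Hcnt := count_levels Hinj.
have Hlev := levels_ge Hdeg Hc (fun j p q Hj Hp Hq E => (Hinj j j p q Hj Hj Hp Hq E).2).
have Himg : #|[set kp.2.2 | kp in Uset e S1 d]| + 1 <= #|T|.
  set img := [set _ | _ in _].
  have Hxn : x \notin img.
    apply/imsetP => -[[k p]]; rewrite inE /= => Hp /esym.
    by apply/eqP; apply: Hx Hp.
  by have := max_card (x |: img); rewrite cardsU1 Hxn add1n addn1.
rewrite -(sum_geom 3 d).
apply: leq_trans (_ : \sum_(k < d) #|iter k (Fx e) S1| + 3 <= _).
  by rewrite leq_add2r; apply: leq_sum => k _; apply: Hlev.
by rewrite Hcnt (_ : 3 = 1 + 2) // addnA leq_add2r.
Qed.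

Lemma moore_edge (x y : T) d : e x y -> d.*2.+1 < girth e -> 2 ^ d.+2 <= #|T| + 2.
Proof.
move=> Exy Hg.
have Nxy : x != y by apply: contraTneq Exy => ->; rewrite Hirr.
pose S1 := [set (x, y); (y, x)].
have HS1 : forall p, p \in S1 -> e p.1 p.2.
  by move=> p; rewrite !inE => /orP[] /eqP-> //=; rewrite Hsym.
have Hc : 2 <= #|S1|.
  by rewrite cards2 xpair_eqE negb_and Nxy.
have Hrep := Srep HS1.
have cross : forall u v t1 t2, nbw e (u :: v :: t1) -> nbw e (v :: u :: t2) ->
    last v t1 = last u t2 -> size t1 + (size t2).+1 < girth e -> False.
  move=> u v t1 t2 H1 H2 El Hs.
  have : t1 = u :: t2 by apply: (T2 Hsym Hirr (a:=v)) => //; apply: nbwg_tail H1.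
  by move=> E; move: H1; rewrite E /= eqxx /= andbF.
have Hinj : forall j k p q, j < d.+1 -> k < d.+1 -> p \in iter j (Fx e) S1 ->
    q \in iter k (Fx e) S1 -> p.2 = q.2 -> j = k /\ p = q.
  move=> j k [p1 p2] [q1 q2] Hj Hk /Hrep[a1 [b1 [t1 [H1 H2 H3 H4 H5]]]].
  move=> /Hrep[a2 [b2 [t2 [G1 G2 G3 G4 G5]]]] /= E.
  move: H4 H5 G4 G5 => /= H4 H5 G4 G5.
  have Hjk : j + k <= d.*2 by rewrite -addnn; apply: leq_add.
  have same : a1 = a2 -> b1 = b2 -> j = k /\ (p1, p2) = (q1, q2).
    move=> Ea Eb; subst a2 b2.
    have Et : t1 = t2.
      apply: (T2 Hsym Hirr (a:=b1)); [|exact: nbwg_tail H2|exact: nbwg_tail G2|by rewrite H4 G4 E].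
      by rewrite H3 G3; apply: leq_ltn_trans Hg; apply: leq_trans Hjk _.
    subst t2; split; first by rewrite -H3 -G3.
    by congr pair; rewrite -?H5 -?G5.
  move: H1 G1; rewrite !inE !xpair_eqE => /orP[] /andP[/eqP Ea1 /eqP Eb1] /orP[] /andP[/eqP Ea2 /eqP Eb2];
    subst a1 b1 a2 b2; try exact: same.
  - exfalso; apply: (cross x y t1 t2) => //; first by rewrite H4 G4 E.
    by rewrite H3 G3 addnS; apply: leq_ltn_trans Hg; rewrite ltnS.
  - exfalso; apply: (cross x y t2 t1) => //; first by rewrite H4 G4 E.
    by rewrite H3 G3 addnS addnC; apply: leq_ltn_trans Hg; rewrite ltnS.
have Hcnt := count_levels Hinj.
have Hlev := levels_ge Hdeg Hc (fun j p q Hj Hp Hq E => (Hinj j j p q Hj Hj Hp Hq E).2).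
have Himg : #|[set kp.2.2 | kp in Uset e S1 d.+1]| <= #|T| by apply: max_card.
have := sum_geom 2 d.+1; rewrite -expnS => <-.
apply: leq_add => //.
apply: leq_trans Himg; rewrite -Hcnt; apply: leq_sum => k _; exact: Hlev (ltn_ord k).
Qed.
End Moore2.

Lemma nbwg_map (A B : eqType) (r d : rel A) (r' d' : rel B) (f : A -> B) :
  (forall a b, r a b -> r' (f a) (f b)) -> (forall a b, d a b -> d' (f a) (f b)) ->
  forall w, nbwg r d w -> nbwg r' d' (map f w).
Proof.
move=> Hr Hd; elim => [|a w IH] // H.
have Hw := IH (nbwg_tail H).
case: w H Hw {IH} => [|b w] // H Hw.
rewrite map_cons map_cons nbwg_cons2 -map_cons Hw andbT.
move: H; rewrite nbwg_cons2 => /and3P[H1 H2 _].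
rewrite Hr //=; case: w H2 {Hw} => //= c w; exact: Hd.
Qed.

Fixpoint allif (p : nat -> bool) (s : seq nat) : bool :=
  if s is a :: s' then (if p a then allif p s' else false) else true.

Lemma allifE p s : allif p s = all p s.
Proof. by elim: s => //= a s ->; case: (p a). Qed.

Section Ident.
Variables (T : finType) (e : rel T).
Hypothesis Hsym : symmetric e.
Hypothesis Hirr : irreflexive e.
Hypothesis Hcub : forall x, #|[pred y | e x y]| = 3.
Variables (x0 : T) (n : nat) (par cidx : nat -> nat).

Definition kidsl (v : T) (po : option T) : seq T :=
  enum [pred w | e v w && (if po is Some q then w != q else true)].

Definition newv (L : seq T) (i : nat) : T :=
  if i is 0 then x0 else
  nth x0 (kidsl (nth x0 L (par i))
      (if par i is 0 then None else Some (nth x0 L (par (par i))))) (cidx i).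

Fixpoint lab (k : nat) : seq T :=
  if k is k'.+1 then rcons (lab k') (newv (lab k') k') else [::].

Definition gn (i : nat) : T := nth x0 (lab n) i.

Lemma size_lab k : size (lab k) = k.
Proof. by elim: k => //= k IH; rewrite size_rcons IH. Qed.

Lemma nth_lab k i : i < k -> nth x0 (lab k) i = newv (lab i) i.
Proof.
elim: k => // k IH; rewrite ltnS leq_eqVlt => /orP[/eqP->|Hi] /=.
  by rewrite nth_rcons size_lab ltnn eqxx.
by rewrite nth_rcons size_lab Hi IH.
Qed.

Definition SH := all (fun i => (par i < i) && (cidx i < (if par i == 0 then 3 else 2))) (iota 1 n.-1).

Hypothesis HSH : SH.

Lemma SHi i : 0 < i < n -> (par i < i) && (cidx i < (if par i == 0 then 3 else 2)).
Proof.
move=> /andP[i0 iN]; move/allP: HSH; apply; rewrite mem_iota i0 /=.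
by case: n iN => // n' /=; rewrite add1n.
Qed.

Lemma gnE i : 0 < i < n -> gn i = nth x0 (kidsl (gn (par i))
      (if par i is 0 then None else Some (gn (par (par i))))) (cidx i).
Proof.
move=> Hi; have /andP[Hp _] := SHi Hi; case/andP: Hi => i0 iN.
have E j : j < i -> nth x0 (lab i) j = nth x0 (lab n) j.
  by move=> ji; rewrite !nth_lab // (ltn_trans ji iN).
rewrite /gn nth_lab // /newv; case: i i0 iN Hp E => // i _ iN Hp E.
rewrite E //; case Ep: (par i.+1) => [|p] //.
rewrite E //.
have Hpn : 0 < p.+1 < n by rewrite /= -Ep (ltn_trans Hp iN).
have /andP[Hpp _] := SHi Hpn.
by apply: ltn_trans Hpp _; rewrite -Ep.
Qed.

Lemma Hdeg3 v : 3 <= #|[pred y | e v y]|. Proof. by rewrite Hcub. Qed.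

Lemma size_kids v po : (if po is Some _ then 2 else 3) <= size (kidsl v po).
Proof.
rewrite /kidsl -cardE; case: po => [q|].
  exact: (deg_minus Hdeg3).
by rewrite -(Hcub v); apply: eq_leq; apply: eq_card => w; rewrite !inE andbT.
Qed.

Lemma kid_mem i : 0 < i < n ->
  gn i \in kidsl (gn (par i)) (if par i is 0 then None else Some (gn (par (par i)))).
Proof.
move=> Hi; rewrite gnE //; apply: mem_nth.
have /andP[_ Hc] := SHi Hi; apply: leq_trans Hc _.
by case: (par i) (size_kids (gn (par i)) (if par i is 0 then None else Some (gn (par (par i))))).
Qed.

Lemma GE i : 0 < i < n -> e (gn (par i)) (gn i).
Proof. by move/kid_mem; rewrite mem_enum inE => /andP[]. Qed.

Lemma GP i : 0 < i < n -> 0 < par i -> gn i != gn (par (par i)).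
Proof.
move/kid_mem; rewrite mem_enum inE => /andP[_].
by case: (par i).
Qed.

Lemma GS i j : 0 < i < n -> 0 < j < n -> par i = par j -> cidx i != cidx j -> gn i != gn j.
Proof.
move=> Hi Hj Ep Nc; rewrite (gnE Hi) (gnE Hj) Ep.
have /andP[_ Hci] := SHi Hi; have /andP[_ Hcj] := SHi Hj.
have Hs c : c < (if par j == 0 then 3 else 2) ->
    c < size (kidsl (gn (par j)) (if par j is 0 then None else Some (gn (par (par j))))).
  move=> Hc; apply: leq_trans Hc _.
  move: (size_kids (gn (par j)) (if par j is 0 then None else Some (gn (par (par j))))).
  by case: (par j).
rewrite nth_uniq ?enum_uniq //; apply: Hs => //; by rewrite -Ep.
Qed.

Definition Kr (i j : nat) : bool :=
  ((0 < i < n) && (par i == j)) || ((0 < j < n) && (par j == i)).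
Definition gpr (i j : nat) : bool := [&& 0 < i < n, 0 < par i & par (par i) == j].
Definition sibr (i j : nat) : bool :=
  [&& 0 < i < n, 0 < j < n, par i == par j & cidx i != cidx j].
Definition Dr (i j : nat) : bool := [|| sibr i j, gpr i j | gpr j i].

Lemma KrE i j : Kr i j -> e (gn i) (gn j).
Proof.
case/orP => /andP[Hi /eqP <-]; first by rewrite Hsym; apply: GE.
exact: GE.
Qed.

Lemma DrE i j : Dr i j -> gn i != gn j.
Proof.
case/or3P.
- by case/and4P => Hi Hj /eqP Ep Nc; apply: GS.
- by case/and3P => Hi Hp /eqP <-; apply: GP.
- by case/and3P => Hi Hp /eqP <-; rewrite eq_sym; apply: GP.
Qed.

Fixpoint anc (f i : nat) : seq nat :=
  if f is f'.+1 then i :: (if i is 0 then [::] else anc f' (par i)) else [::].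

Definition tp (i j : nat) : seq nat :=
  let ai := anc n.+1 i in let aj := anc n.+1 j in
  let l := nth 0 ai (find (fun a => a \in aj) ai) in
  take (index l ai).+1 ai ++ rev (take (index l aj) aj).

Variable g0 : nat.
Hypothesis Hg0 : g0 <= girth e.

Definition certinj (i j : nat) : bool :=
  if tp i j is a :: w then [&& a == i, last a w == j, nbwg Kr Dr (a :: w) & size w < g0]
  else false.

Lemma gn_inj : (forall i j, i < n -> j < n -> i != j -> certinj i j) ->
  forall i j, i < n -> j < n -> gn i = gn j -> i = j.
Proof.
move=> Hc i j Hi Hj E; apply/eqP; apply/negP => /negP Nij.
have := Hc i j Hi Hj Nij; rewrite /certinj.
case: (tp i j) => // a w /and4P[/eqP Ea /eqP El Hw Hs]; subst a.
have Hm : nbw e (map gn (i :: w)).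
  by apply: (nbwg_map (r:=Kr) (d:=Dr)) => //; [exact: KrE | exact: DrE].
have Hu : uniq (map gn (i :: w)).
  by apply: (nbwU Hirr Hm); rewrite size_map; exact: leq_trans Hs Hg0.
move: Hu; rewrite map_cons; apply/negP; apply: closed_nonuniq.
  by case: w El {Hw Hs Hm} => //= El; move: Nij; rewrite El eqxx.
by rewrite last_map El E.
Qed.

Definition dE (u v : nat) : bool := [&& u != v, u < n & v < n].
Definition Kx (i j : nat) (u v : nat) : bool :=
  [|| Kr u v, (u == i) && (v == j) | (u == j) && (v == i)].

Definition certexc (i j : nat) : bool :=
  if tp j i is a :: w then
    [&& a == j, last a w == i, nbwg (Kx i j) dE (rcons (a :: w) j) & size w + 2 <= g0]
  else false.

Lemma exc (Hinj : forall i j, i < n -> j < n -> gn i = gn j -> i = j) i j :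
  certexc i j -> ~~ e (gn i) (gn j).
Proof.
rewrite /certexc; case: (tp j i) => // a w /and4P[/eqP Ea /eqP El Hw Hs]; subst a.
apply/negP => Eij.
have Hm : nbw e (map gn (rcons (j :: w) j)).
  apply: (nbwg_map (r:=Kx i j) (d:=dE)) => //.
    move=> u v /or3P[/KrE //|/andP[/eqP-> /eqP->]//|/andP[/eqP-> /eqP->]].
    by rewrite Hsym.
  move=> u v /and3P[Nuv Hu Hv]; apply: contra Nuv => /eqP E.
  by apply/eqP; apply: Hinj.
have Hu : uniq (map gn (rcons (j :: w) j)).
  by apply: (nbwU Hirr Hm); rewrite size_map size_rcons /= -addn2; exact: leq_trans Hs Hg0.
move: Hu; rewrite rcons_cons map_cons; apply/negP; apply: closed_nonuniq.
  by rewrite map_rcons; case: (map gn w).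
by rewrite map_rcons last_rcons.
Qed.

Fixpoint allbits (m : nat) : seq (seq bool) :=
  if m is m'.+1 then [seq b :: s | b <- [:: false; true], s <- allbits m'] else [:: [::]].

Lemma allbitsP m s : size s = m -> s \in allbits m.
Proof.
elim: m s => [|m IH] [|b s] //; move=> /= [Hs]; rewrite cats0 mem_cat; apply/orP.
by case: b; [right|left]; rewrite mem_map ?IH //; move=> ? ? [].
Qed.

Variable Far : seq (nat * nat).
Fixpoint flk (L : seq (nat * nat)) (f : seq bool) (i j : nat) : bool :=
  match L, f with
  | (a, b) :: L', c :: f' =>
      if (eqn a i && eqn b j) || (eqn a j && eqn b i) then c else flk L' f' i j
  | _, _ => false end.
Definition isFar (i j : nat) : bool := ((i, j) \in Far) || ((j, i) \in Far).
Definition Adj (f : seq bool) (i j : nat) : bool := if Kr i j then true else flk Far f i j.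

Definition Rl (i j : nat) : bool := e (gn i) (gn j).
Definition f0 : seq bool := map (fun pr => Rl pr.1 pr.2) Far.

Lemma farlook_notFar f i j : ~~ isFar i j -> flk Far f i j = false.
Proof.
rewrite /isFar; elim: Far f => [|[a b] L IH] [|c f] //= H.
move: H; rewrite !inE !negb_or => /andP[/andP[H1 H1'] /andP[H2 H2']].
rewrite IH; last by rewrite negb_or H1' H2'.
rewrite !eqnE; case: ifP => // /orP[] /andP[/eqP Ea /eqP Eb]; subst a b.
  by rewrite eqxx in H1.
by rewrite eqxx in H2.
Qed.

Lemma farlook_f0 i j : isFar i j -> flk Far f0 i j = Rl i j.
Proof.
rewrite /f0 /isFar; elim: Far => [|[a b] L IH] //= H.
rewrite !eqnE; case: ifP => [/orP[] /andP[/eqP Ea /eqP Eb]|Hn].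
- by subst a b.
- by subst a b; rewrite /Rl Hsym.
apply: IH; move: H; rewrite !inE => /orP[/orP[/eqP[Ea Eb]|->]|/orP[/eqP[Ea Eb]|->]];
  rewrite ?orbT //; subst a b; by rewrite !eqxx ?orbT in Hn.
Qed.

Definition CCls : bool :=
  all (fun i => all (fun j =>
    if i == j then ~~ Kr i i && ~~ isFar i i else
    [|| Kr i j && ~~ isFar i j, isFar i j && ~~ Kr i j |
        [&& ~~ Kr i j, ~~ isFar i j & certexc i j]]) (iota 0 n)) (iota 0 n).

Definition CInj : bool :=
  all (fun i => all (fun j => (i == j) || certinj i j) (iota 0 n)) (iota 0 n).

Hypothesis HCInj : CInj.
Hypothesis HCCls : CCls.

Lemma gn_inj' i j : i < n -> j < n -> gn i = gn j -> i = j.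
Proof.
apply: gn_inj => i' j' Hi Hj Nij.
move/allP: HCInj => /(_ i'); rewrite mem_iota Hi => /(_ isT) /allP /(_ j').
by rewrite mem_iota Hj (negbTE Nij) => /(_ isT).
Qed.

Lemma RAdj i j : i < n -> j < n -> Rl i j = Adj f0 i j.
Proof.
move=> Hi Hj; move/allP: HCCls => /(_ i); rewrite mem_iota Hi => /(_ isT) /allP /(_ j).
rewrite mem_iota Hj => /(_ isT).
case: ifP => [/eqP<- /andP[K F]|_].
  by rewrite /Rl Hirr /Adj (negbTE K) farlook_notFar.
case/or3P => [/andP[K F]|/andP[F K]|/and3P[K F C]].
- by rewrite /Rl /Adj K (KrE K).
- by rewrite /Adj (negbTE K) farlook_f0.
- rewrite /Adj (negbTE K) farlook_notFar //.
  by apply/negbTE; apply: exc => //; apply: gn_inj'.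
Qed.

Hypothesis HcardT : #|T| = n.

Lemma card_count (P : pred T) : #|P| = count (P \o gn) (iota 0 n).
Proof.
have Hu : uniq (map gn (iota 0 n)).
  rewrite map_inj_in_uniq ?iota_uniq // => i j; rewrite !mem_iota /= !add0n.
  exact: gn_inj'.
have Hall : forall w, w \in map gn (iota 0 n).
  have Hsz : size (enum T) <= size (map gn (iota 0 n)).
    by rewrite size_map size_iota -cardE HcardT.
  have Hsub : {subset map gn (iota 0 n) <= enum T} by move=> w _; rewrite mem_enum.
  have [_ E] := uniq_min_size Hu Hsub Hsz.
  by move=> w; rewrite E mem_enum.
rewrite -count_map -size_filter -(card_uniqP _); last exact: filter_uniq.
by apply: eq_card => w; rewrite mem_filter Hall andbT.
Qed.

Variable rws : seq nat.
Hypothesis Hrws : all (fun i => i < n) rws.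

Definition rows_ok (f : seq bool) : bool :=
  allif (fun i => count (Adj f i) (iota 0 n) == 3) rws.

Lemma rows_f0 : rows_ok f0.
Proof.
rewrite /rows_ok allifE; apply/allP => i Hi'.
have Hi : i < n by move/allP: Hrws; apply.
rewrite -(eq_in_count (a1 := Rl i)); last first.
  by move=> j; rewrite mem_iota /= add0n => Hj; apply: RAdj.
by rewrite -(Hcub (gn i)) card_count.
Qed.

Definition no3 (f : seq bool) : bool :=
  all (fun a => all (fun b => if Adj f a b then all (fun c =>
    ~~ (Adj f b c && Adj f c a)) (iota 0 n) else true) (iota 0 n)) (iota 0 n).

Definition no4 (f : seq bool) : bool :=
  all (fun a => all (fun b => if Adj f a b then all (fun c =>
    if (c != a) && Adj f b c then all (fun d => ~~ [&& d != b, Adj f c d & Adj f d a]) (iota 0 n)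
    else true) (iota 0 n) else true) (iota 0 n)) (iota 0 n).

Lemma Rl_neq i j : Rl i j -> i != j.
Proof. by apply: contraTneq => ->; rewrite /Rl Hirr. Qed.

Lemma map_uniq_gn (s : seq nat) : all (fun i => i < n) s -> uniq s -> uniq (map gn s).
Proof.
move=> /allP Hs Hu; rewrite map_inj_in_uniq // => i j Hi Hj.
by apply: gn_inj'; apply: Hs.
Qed.

Lemma no3_f0 : 3 < girth e -> no3 f0.
Proof.
move=> Hg; apply/allP => a; rewrite mem_iota /= add0n => Ha.
apply/allP => b; rewrite mem_iota /= add0n => Hb.
case: ifP => // Hab; apply/allP => c; rewrite mem_iota /= add0n => Hc.
apply/negP => /andP[Hbc Hca].
rewrite -!RAdj // in Hab Hbc Hca.
have Hcy : has_cycle_of_length e 3.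
  apply/andP; split => //; apply/existsP.
  exists (in_tuple (map gn [:: a; b; c])).
  rewrite map_uniq_gn /= ?Ha ?Hb ?Hc //; last first.
    by rewrite !inE negb_or Rl_neq // eq_sym Rl_neq // Rl_neq.
  by move: Hab Hbc Hca; rewrite /Rl => -> -> ->.
by have := girth_le Hcy; rewrite leqNgt Hg.
Qed.

Lemma no4_f0 : 4 < girth e -> no4 f0.
Proof.
move=> Hg; apply/allP => a; rewrite mem_iota /= add0n => Ha.
apply/allP => b; rewrite mem_iota /= add0n => Hb.
case: ifP => // Hab; apply/allP => c; rewrite mem_iota /= add0n => Hc.
case: ifP => // /andP[Nca Hbc]; apply/allP => d; rewrite mem_iota /= add0n => Hd.
apply/negP => /and3P[Ndb Hcd Hda].
rewrite -!RAdj // in Hab Hbc Hcd Hda.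
have Hcy : has_cycle_of_length e 4.
  apply/andP; split => //; apply/existsP.
  exists (in_tuple (map gn [:: a; b; c; d])).
  rewrite map_uniq_gn /= ?Ha ?Hb ?Hc ?Hd //; last first.
    rewrite !inE !negb_or Rl_neq // eq_sym Nca eq_sym Rl_neq //= Rl_neq //= eq_sym Ndb /=.
    by rewrite Rl_neq.
  by move: Hab Hbc Hcd Hda; rewrite /Rl => -> -> -> ->.
by have := girth_le Hcy; rewrite leqNgt Hg.
Qed.

Variables (tg : nat -> nat -> bool) (sg : seq bool -> nat -> nat) (flag3 flag4 : bool).

Definition iso_ok (f : seq bool) : bool :=
  let s := sg f in
  [&& all (fun i => s i < n) (iota 0 n), uniq (map s (iota 0 n)) &
      all (fun i => all (fun j => Adj f (s i) (s j) == tg i j) (iota 0 n)) (iota 0 n)].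

Definition CMain : bool :=
  all (fun f => if rows_ok f then
                 (if (if flag3 then no3 f else true) then
                  (if (if flag4 then no4 f else true) then iso_ok f else true) else true)
               else true) (allbits (size Far)).

Hypothesis HCMain : CMain.
Hypothesis Hf3 : flag3 -> 3 < girth e.
Hypothesis Hf4 : flag4 -> 4 < girth e.

Lemma ident_iso : graph_iso e (fun i j : 'I_n => tg i j).
Proof.
have Hf0 : f0 \in allbits (size Far) by apply: allbitsP; rewrite size_map.
move/allP: HCMain => /(_ _ Hf0); rewrite rows_f0.
rewrite (_ : (if flag3 then no3 f0 else true) = true); last by case: flag3 Hf3 => // /(_ isT) /no3_f0.
rewrite (_ : (if flag4 then no4 f0 else true) = true); last by case: flag4 Hf4 => // /(_ isT) /no4_f0.
case/and3P => /allP Hs Hu /allP Ht.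
have Hsn (i : 'I_n) : sg f0 i < n by apply: Hs; rewrite mem_iota /= add0n.
pose h (i : 'I_n) : T := gn (sg f0 i).
have hinj : injective h.
  move=> i j /(gn_inj' (Hsn i) (Hsn j)) E; apply: val_inj => /=.
  have := nth_uniq 0 (_ : nat_of_ord i < size (map (sg f0) (iota 0 n))) (_ : nat_of_ord j < _) Hu.
  rewrite !size_map !size_iota !ltn_ord => /(_ isT isT).
  by rewrite !(nth_map 0) ?size_iota // !nth_iota // !add0n E eqxx => /esym/eqP.
have hbij : bijective h by apply: inj_card_bij => //; rewrite card_ord HcardT.
case: hbij => h' hK h'K.
exists h'; split; first by exists h.
move=> u v; rewrite -{1}[u]h'K -{1}[v]h'K /h -/(Rl _ _) RAdj ?Hsn //.
have := Ht (h' u); rewrite mem_iota /= add0n ltn_ord => /(_ isT) /allP /(_ (h' v)).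
by rewrite mem_iota /= add0n ltn_ord => /(_ isT) /eqP.
Qed.
End Ident.

Section Hand.
Variables (T : finType) (e : rel T).
Hypothesis Hsym : symmetric e.
Hypothesis Hirr : irreflexive e.

Lemma set2_eq (u v a b : T) : u != v ->
  ([set u; v] == [set a; b]) = ((u, v) == (a, b)) || ((u, v) == (b, a)).
Proof.
move=> Nuv; apply/eqP/orP => [E|[] /eqP[-> ->]]; last 2 first.
- by [].
- by rewrite setUC.
have Hu : u \in [set a; b] by rewrite -E set21.
have Hv : v \in [set a; b] by rewrite -E set22.
case/set2P: Hu => Eu; case/set2P: Hv => Ev; subst u v;
  first [by left | by right | by move: Nuv; rewrite eqxx].
Qed.

Lemma handshake : \sum_(x : T) #|[pred y | e x y]| = 2 * #|edges e|.
Proof.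
pose A := [set p : T * T | e p.1 p.2].
have E1 : \sum_(x : T) #|[pred y | e x y]| = #|A|.
  rewrite -sum1_card (eq_bigl (fun p : T * T => true && e p.1 p.2)); last by move=> p; rewrite inE.
  rewrite -(pair_big_dep xpredT (fun x y => e x y) (fun _ _ => 1)).
  by apply: eq_bigr => x _; rewrite sum1_card.
rewrite E1 -sum1_card.
rewrite (partition_big (fun p : T * T => [set p.1; p.2]) (mem (edges e))); last first.
  move=> [u v]; rewrite inE /= => Huv; apply/imset2P; exists u v => //.
  by rewrite inE.
rewrite mulnC -sum_nat_const; apply: eq_bigr => E /imset2P[a b _]; rewrite inE => Hab ->.
have Nab : a != b by apply: contraTneq Hab => ->; rewrite Hirr.
have -> : \sum_(i in A | [set i.1; i.2] == [set a; b]) 1 = #|[set (a, b); (b, a)]|.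
  rewrite -sum1_card; apply: eq_bigl => [[u v]]; rewrite !inE /=.
  case Huv : (e u v) => /=.
    have Nuv : u != v by apply: contraTneq Huv => ->; rewrite Hirr.
    by rewrite set2_eq.
  apply/esym/negbTE; rewrite negb_or; apply/andP; split; apply: contraFN Huv => /eqP[-> ->] //.
  by rewrite Hsym.
by rewrite cards2 xpair_eqE negb_and Nab.
Qed.

Lemma cubic (Hdeg : forall x, 3 <= #|[pred y | e x y]|) :
  \sum_(x : T) #|[pred y | e x y]| = 3 * #|T| -> forall x, #|[pred y | e x y]| = 3.
Proof.
move=> Hs x; apply/eqP; rewrite eqn_leq Hdeg andbT.
have : \sum_(x : T) (#|[pred y | e x y]| - 3) == 0.
  rewrite sumnB; last by move=> i _; apply: Hdeg.
  by rewrite Hs sum_nat_const cardE -cardE mulnC subnn.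
rewrite sum_nat_eq0 => /forallP /(_ x) /=.
by rewrite subn_eq0.
Qed.
End Hand.

Lemma pow_lb d : 3 <= d -> 4 * d <= 2 ^ d + 4.
Proof.
elim: d => // d IH; rewrite leq_eqVlt => /orP[/eqP <- //|Hd].
have H1 := IH Hd.
have H2 : 4 <= 2 ^ d.
  by rewrite (_ : 4 = 2 ^ 2) // leq_exp2l // ltnW.
rewrite expnS; lia.
Qed.

Definition mkrel (L : seq (nat * nat)) (i j : nat) : bool := ((i, j) \in L) || ((j, i) \in L).
Definition parK (i : nat) : nat := nth 0 [:: 0; 0; 0; 0; 1; 1] i.
Definition cidK (i : nat) : nat := nth 0 [:: 0; 0; 1; 2; 0; 1] i.
Definition FarK : seq (nat * nat) := [:: (2,4); (2,5); (3,4); (3,5)].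
Definition tgK : nat -> nat -> bool := mkrel
  [:: (0,1); (0,2); (0,3); (1,4); (1,5); (2,4); (2,5); (3,4); (3,5)].
Definition sgK (f : seq bool) (i : nat) : nat := i.
Lemma K_SH : SH 6 parK cidK. Proof. by vm_compute. Qed.
Lemma K_Inj : CInj 6 parK cidK 4. Proof. by vm_compute. Qed.
Lemma K_Cls : CCls 6 parK 4 FarK. Proof. by vm_compute. Qed.
Lemma K_Main : CMain 6 parK FarK [:: 2; 3; 4; 5] tgK sgK false false. Proof. by vm_compute. Qed.


(* Petersen *)
Definition parP (i : nat) : nat := nth 0 [:: 0; 0; 0; 0; 1; 1; 2; 2; 3; 3] i.
Definition cidP (i : nat) : nat := nth 0 [:: 0; 0; 1; 2; 0; 1; 0; 1; 0; 1] i.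
Definition FarP : seq (nat * nat) :=
  [:: (4,6); (4,7); (4,8); (4,9); (5,6); (5,7); (5,8); (5,9); (6,8); (6,9); (7,8); (7,9)].
Definition tgP : nat -> nat -> bool := mkrel
  [:: (0,1); (0,2); (0,3); (1,4); (1,5); (2,6); (2,7); (3,8); (3,9);
      (4,6); (4,8); (5,7); (5,9); (6,9); (7,8)].
Definition sgP (f : seq bool) (i : nat) : nat :=
  let b6 := Adj 10 parP FarP f 4 6 in
  let b8 := Adj 10 parP FarP f 4 8 in
  match i with
  | 6 => if b6 then 6 else 7
  | 7 => if b6 then 7 else 6
  | 8 => if b8 then 8 else 9
  | 9 => if b8 then 9 else 8
  | _ => i end.

Lemma P_SH : SH 10 parP cidP. Proof. by vm_compute. Qed.
Lemma P_Inj : CInj 10 parP cidP 5. Proof. by vm_compute. Qed.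
Lemma P_Cls : CCls 10 parP 5 FarP. Proof. by vm_compute. Qed.
Lemma P_Main : CMain 10 parP FarP [:: 4; 5; 6; 7; 8; 9] tgP sgP true true. Proof. vm_cast_no_check (erefl true). Time Qed.


(* Heawood *)
Definition parH (i : nat) : nat := nth 0 [:: 0; 0; 0; 0; 1; 1; 2; 2; 3; 3; 4; 4; 5; 5] i.
Definition cidH (i : nat) : nat := nth 0 [:: 0; 0; 1; 2; 0; 1; 0; 1; 0; 1; 0; 1; 0; 1] i.
Definition FarH : seq (nat * nat) :=
  [seq (i, j) | i <- [:: 6; 7; 8; 9], j <- [:: 10; 11; 12; 13]].
Definition tgH : nat -> nat -> bool := mkrel
  [:: (0,1); (0,2); (0,3); (1,4); (1,5); (2,6); (2,7); (3,8); (3,9); (4,10); (4,11); (5,12); (5,13);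
      (6,10); (6,12); (7,11); (7,13); (8,10); (9,11); (8,13); (9,12)].
Definition sgH (f : seq bool) (i : nat) : nat :=
  let A := Adj 14 parH FarH f in
  let c1 := if A 6 10 then 10 else 11 in
  let c2 := if A 6 10 then 11 else 10 in
  let d1 := if A 6 12 then 12 else 13 in
  let d2 := if A 6 12 then 13 else 12 in
  let b1 := if A 8 c1 then 8 else 9 in
  let b2 := if A 8 c1 then 9 else 8 in
  match i with
  | 8 => b1 | 9 => b2 | 10 => c1 | 11 => c2 | 12 => d1 | 13 => d2
  | _ => i end.

Lemma H_SH : SH 14 parH cidH. Proof. by vm_compute. Qed.
Lemma H_Inj : CInj 14 parH cidH 6. Proof. by vm_compute. Qed.
Lemma H_Cls : CCls 14 parH 6 FarH. Proof. by vm_compute. Qed.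
Lemma H_Main : CMain 14 parH FarH [:: 6; 7; 8; 9; 10; 11; 12; 13] tgH sgH false true. Proof. vm_cast_no_check (erefl true). Time Qed.

Theorem mainTheorem10 :
  exists (n1 n2 n3 : nat) (e1 : rel 'I_n1) (e2 : rel 'I_n2) (e3 : rel 'I_n3),
  forall (T : finType) (e : rel T),
    simple_graph e ->
    two_connected e ->
    (forall x : T, 3 <= valency e x) ->
    (4 <= genus e)%R ->
    ~ ((girth e)%:Z <= ((genus e + 3) %/ 2)%Z)%R ->
    graph_iso e e1 \/ graph_iso e e2 \/ graph_iso e e3.
Proof.
exists 6, 10, 14, (fun i j : 'I_6 => tgK i j), (fun i j : 'I_10 => tgP i j),
  (fun i j : 'I_14 => tgH i j).
move=> T e [Hsym Hirr] [_ H3 _] Hdeg Hgen Hgir.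
have Hhs := handshake Hsym Hirr.
have N3 : 3 * #|T| <= 2 * #|edges e|.
  rewrite -Hhs mulnC (_ : #|T| * 3 = \sum_(x : T) 3); last by rewrite sum_nat_const cardE -cardE.
  by apply: leq_sum => x _; apply: Hdeg.
move: Hgen Hgir; rewrite /genus.
move: N3 Hhs; set v := #|T|; set E := #|edges e|; set g := girth e => N3 Hhs Hgen Hgir.
have N1 : v + 3 <= E by lia.
have N2 : E + 5 <= 2 * g + v by lia.
have [x _] : exists x : T, true.
  have : 0 < #|T| by apply: leq_trans H3.
  by case/card_gt0P => x _; exists x.
have Hcub : 2 * E = 3 * v -> forall x, #|[pred y | e x y]| = 3.
  by move=> H; apply: (cubic Hdeg); rewrite Hhs H.
have Hg := odd_double_half g.
case Ho: (odd g) in Hg.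
-
  set d := g./2 in Hg.
  have Hm := moore_vertex Hsym Hirr Hdeg x (d := d) (_ : d.*2 < g).
  rewrite -/v in Hm.
  have Hm' : 3 * 2 ^ d <= v + 2 by apply: Hm; rewrite -Hg.
  case: (ltnP d 3) => Hd.
  + have Hg' : g = d * 2 + 1 by rewrite -Hg -muln2 /= addnC.
    have Hd2 : d = 2 by lia.
    rewrite Hd2 in Hg' Hm'.
    have Hv : v = 10 by lia.
    have HE : 2 * E = 3 * v by lia.
    right; left.
    have Hg5 : 5 <= girth e by rewrite -/g Hg'.
    apply: (@ident_iso T e Hsym Hirr (Hcub HE) x 10 parP cidP P_SH 5 Hg5 FarP P_Inj P_Cls
      Hv [:: 4; 5; 6; 7; 8; 9] isT tgP sgP true true P_Main) => _.
      by apply: leq_trans Hg5.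
    by [].
  + have Hg' : g = d * 2 + 1 by rewrite -Hg -muln2 /= addnC.
    have := pow_lb Hd; move: Hm'; set P := 2 ^ d; lia.
-
  rewrite add0n in Hg.
  case: (g./2) Hg => [|d'] Hg; first by rewrite -Hg in N2; lia.
  have [y Exy] : exists y, e x y.
    have : 0 < #|[pred y | e x y]| by apply: leq_trans (Hdeg x).
    by case/card_gt0P => y; rewrite inE => Hy; exists y.
  have Hm' : 2 ^ d'.+2 <= v + 2.
    by apply: (moore_edge Hsym Hirr Hdeg Exy); rewrite -/g -Hg.
  case: (ltnP d' 3) => Hd.
  + move: Hd Hm' N1 N2 N3 Hg; case: d' => [|[|[|]]] //= _ Hm' N1 N2 N3 Hg.
    * lia.
    * (* K33 *)
      have Hv : v = 6 by lia.
      have HE : 2 * E = 3 * v by lia.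
      left.
      have Hg4 : 4 <= girth e by rewrite -/g -Hg.
      exact: (@ident_iso T e Hsym Hirr (Hcub HE) x 6 parK cidK K_SH 4 Hg4 FarK K_Inj K_Cls
        Hv [:: 2; 3; 4; 5] isT tgK sgK false false K_Main).
    *
      have Hv : v = 14 by lia.
      have HE : 2 * E = 3 * v by lia.
      right; right.
      have Hg6 : 6 <= girth e by rewrite -/g -Hg.
      apply: (@ident_iso T e Hsym Hirr (Hcub HE) x 14 parH cidH H_SH 6 Hg6 FarH H_Inj H_Cls
        Hv [:: 6; 7; 8; 9; 10; 11; 12; 13] isT tgH sgH false true H_Main) => //.
      by move=> _; apply: leq_trans Hg6.
  + have Hg' : g = d' * 2 + 2 by rewrite -Hg doubleS -muln2 addn2.
    have := pow_lb Hd; move: Hm'; rewrite !expnS; set P := 2 ^ d'; lia.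
Qed.
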